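(* Let $r$ be a parameter and let $eF_r=(e_{n,k})_{n,k\ge0}$ be the $f$-matrix of the exponential Riordan array $\left[e^x, x(1+rx/2)\right]$, i.e. $eF_r=\left[e^x,x(1+rx/2)\right]\cdot\left[e^x,x\right]=\left[e^{2x+rx^2/2},x(1+rx/2)\right]$. Then the ordinary generating function (in $x$ and $y$) of the reversal of $eF_r$, $$\sum_{n\ge0}\sum_{k=0}^n e_{n,n-k}\,x^ny^k,$$ is given by the continued fraction $$\cfrac{1}{1-(2y+1)x- \cfrac{ry(y+1)x^2}{1-(2y+1)x- \cfrac{2ry(y+1)x^2}{1-(2y+1)x- \cfrac{3ry(y+1)x^2}{1-\cdots}}}},$$ that is, the Jacobi continued fraction whose $n$-th level has linear coefficient $2y+1$ and whose $n$-th quadratic coefficient is $n\,ry(y+1)$ ($n=1,2,3,\ldots$).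
   Context: An exponential Riordan array $[g(x),f(x)]$, where $g(x)=1+g_1\frac{x}{1!}+g_2\frac{x^2}{2!}+\cdots$ and $f(x)=\frac{x}{1!}+f_2\frac{x^2}{2!}+\cdots$, is the lower-triangular matrix $(a_{n,k})_{n,k\ge0}$ with $a_{n,k}=\frac{n!}{k!}[x^n]g(x)f(x)^k$; equivalently its bivariate generating function $\sum_{n,k}a_{n,k}\frac{x^n}{n!}y^k$ equals $g(x)e^{yf(x)}$. Products are matrix products; $[e^x,x]$ is the binomial matrix $\left(\binom{n}{k}\right)$. The $f$-matrix of a Pascal-like matrix $M$ is $M\cdot[e^x,x]$. The reversal of a lower-triangular matrix $(a_{n,k})$ has $(n,k)$ entry $a_{n,n-k}$ for $0\le k\le n$. A Jacobi continued fraction $\mathcal{J}(\alpha_1,\alpha_2,\ldots;\beta_1,\beta_2,\ldots)$ denotes the formal power series $\cfrac{1}{1-\alpha_1x-\cfrac{\beta_1x^2}{1-\alpha_2x-\cfrac{\beta_2x^2}{1-\cdots}}}$. *)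

(* Defs.v *)
From mathcomp Require Import all_boot all_order all_algebra.
Set Implicit Arguments. Unset Strict Implicit. Unset Printing Implicit Defensive.
Import GRing.Theory.
Local Open Scope ring_scope.

(* Formal power series in x over a commutative ring S, given by their
   coefficient sequences: a n = [x^n] a. *)
Section FPS.
Variable S : comRingType.

Definition sone : nat -> S := fun n => (n == 0)%:R.
Definition szero : nat -> S := fun _ => 0.
Definition sadd (a b : nat -> S) : nat -> S := fun n => a n + b n.
Definition sopp (a : nat -> S) : nat -> S := fun n => - a n.
Definition sscale (c : S) (a : nat -> S) : nat -> S := fun n => c * a n.
Definition smul (a b : nat -> S) : nat -> S :=
  fun n => \sum_(i < n.+1) a i * b (n - i)%N.
Definition sX (a : nat -> S) : nat -> S :=
  fun n => if n is n'.+1 then a n' else 0.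
Definition spow (a : nat -> S) (k : nat) : nat -> S := iter k (smul a) sone.

(* Coefficients b_0..b_n of the multiplicative inverse 1/a of a series with
   constant term a_0 = 1:  b_0 = 1, b_n = - sum_{i=1}^n a_i b_{n-i}. *)
Fixpoint sinv_upto (a : nat -> S) (n : nat) : seq S :=
  match n with
  | 0 => [:: 1]
  | n'.+1 => let s := sinv_upto a n' in
             rcons s (- \sum_(i < n'.+1) a i.+1 * nth 0 s (n' - i)%N)
  end.
Definition sinv (a : nat -> S) : nat -> S := fun n => nth 0 (sinv_upto a n) n.

(* Finite truncations of the Jacobi continued fraction
   J(alpha_1, alpha_2, ...; beta_1, beta_2, ...):
   jfrac_tail m k = 1/(1 - alpha_k x - beta_k x^2 /(1 - ... /(1 - alpha_{k+m-1} x))),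
   with m levels, jfrac_tail 0 k = 0. *)
Fixpoint jfrac_tail (alpha beta : nat -> S) (m k : nat) : nat -> S :=
  match m with
  | 0 => szero
  | m'.+1 =>
      sinv (sadd sone
              (sopp (sadd (sX (sscale (alpha k) sone))
                          (sX (sX (sscale (beta k) (jfrac_tail alpha beta m' k.+1)))))))
  end.
Definition jfrac_conv (alpha beta : nat -> S) (m : nat) : nat -> S :=
  jfrac_tail alpha beta m 1.

(* The formal power series F equals the (infinite) Jacobi continued fraction
   J(alpha_1,...; beta_1,...) : F is the x-adic limit of the convergents,
   i.e. each coefficient of the convergents is eventually equal to that of F. *)
Definition is_Jfrac (alpha beta : nat -> S) (F : nat -> S) : Prop :=
  forall n, exists M, forall m, (M <= m)%N -> jfrac_conv alpha beta m n = F n.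
End FPS.

(* Exponential Riordan arrays over a field R (of characteristic 0):
   g, f are given by their ordinary coefficient sequences.
   [g, f]_{n,k} = n!/k! [x^n] g(x) f(x)^k. *)
Section Riordan.
Variable R : fieldType.

Definition eriordan (g f : nat -> R) (n k : nat) : R :=
  (n`!)%:R / (k`!)%:R * smul g (spow f k) n.

Definition sexp : nat -> R := fun i => ((i`!)%:R)^-1.
Definition sx : nat -> R := fun i => (i == 1)%:R.
Definition sxr (r : R) : nat -> R :=
  fun i => if i == 1 then 1 else if i == 2 then r / 2%:R else 0.

(* The f-matrix eF_r = [e^x, x(1+rx/2)] . [e^x, x]  (matrix product of lower
   triangular matrices; the terms with j > n vanish). *)
Definition eF (r : R) (n k : nat) : R :=
  \sum_(j < n.+1) eriordan sexp (sxr r) n j * eriordan sexp sx j k.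

(* Ordinary generating function of the reversal of eF_r, as a power series
   in x with coefficients in R[y]:  [x^n] = sum_{k=0}^n e_{n,n-k} y^k. *)
Definition rev_eF_gf (r : R) : nat -> {poly R} :=
  fun n => \sum_(k < n.+1) (eF r n (n - k)%N)%:P * 'X^k.
End Riordan.

(* Main.v *)
Require Import Defs.
From mathcomp Require Import all_boot all_order all_algebra.
From Stdlib Require Import FunctionalExtensionality.
From mathcomp Require Import zify ring.
Import GRing.Theory.
Local Open Scope ring_scope.


Section Ser.
Variable S : comRingType.
Implicit Types a b c : nat -> S.

Lemma sum_shift (G : nat -> S) (j N : nat) : (j <= N)%N ->
  \sum_(i < N) (if (j <= i)%N then G i else 0) = \sum_(l < N - j) G (j + l)%N.
Proof.
move=> jN; rewrite -(big_mkord xpredT (fun i => if (j <= i)%N then G i else 0)) (@big_cat_nat _ _ _ j 0 N _ _ (leq0n j) jN) /=.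
rewrite big_nat_cond big1 ?add0r; last first.
  by move=> i /andP[/andP[_ ij] _]; rewrite leqNgt ij.
rewrite -{1}(add0n j) big_addn big_mkord; apply: eq_bigr => i _.
by rewrite leq_addl addnC.
Qed.

Lemma smulC a b : smul a b = smul b a.
Proof.
apply: functional_extensionality => n; rewrite /smul (reindex_inj rev_ord_inj) /=.
apply: eq_bigr => i _; rewrite subSS mulrC; congr (_ * _).
by rewrite subKn // -ltnS.
Qed.

Lemma smulA a b c : smul (smul a b) c = smul a (smul b c).
Proof.
apply: functional_extensionality => n; rewrite /smul.
transitivity (\sum_(j < n.+1) \sum_(i < n.+1)
   (if (j <= i)%N then a j * (b (i - j)%N * c (n - i)%N) else 0)).
  rewrite exchange_big /=; apply: eq_bigr => i _.
  rewrite mulr_suml (big_ord_widen _ (fun i0 => a i0 * b (i - i0)%N * c (n - i)%N) (ltn_ord i)) big_mkcond /=.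
  apply: eq_bigr => j _; rewrite ltnS; case: ifP => // _; by rewrite mulrA.
apply: eq_bigr => j _; rewrite mulr_sumr (sum_shift (fun i => a j * (b (i - j)%N * c (n - i)%N))); last exact: ltnW (ltn_ord j).
rewrite subSn; last by rewrite -ltnS.
apply: eq_bigr => l _; by rewrite addKn subnDA.
Qed.

Lemma smulDl a b c : smul (sadd a b) c = sadd (smul a c) (smul b c).
Proof.
apply: functional_extensionality => n; rewrite /smul /sadd -big_split /=.
by apply: eq_bigr => i _; rewrite mulrDl.
Qed.

Lemma smulNl a c : smul (sopp a) c = sopp (smul a c).
Proof.
apply: functional_extensionality => n; rewrite /smul /sopp -sumrN.
by apply: eq_bigr => i _; rewrite mulNr.
Qed.

Lemma smulZl k a c : smul (sscale k a) c = sscale k (smul a c).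
Proof.
apply: functional_extensionality => n; rewrite /smul /sscale mulr_sumr.
by apply: eq_bigr => i _; rewrite mulrA.
Qed.

Lemma smulXl a c : smul (sX a) c = sX (smul a c).
Proof.
apply: functional_extensionality => -[|n]; rewrite /smul /sX.
  by rewrite big_ord_recl big_ord0 mul0r addr0.
by rewrite big_ord_recl mul0r add0r; apply: eq_bigr => i _; rewrite subSS.
Qed.

Lemma smul1l c : smul (sone S) c = c.
Proof.
apply: functional_extensionality => n; rewrite /smul /sone big_ord_recl /= mul1r subn0.
by rewrite big1 ?addr0 // => i _; rewrite mul0r.
Qed.

Lemma smul0l c : smul (szero S) c = szero S.
Proof.
by apply: functional_extensionality => n; rewrite /smul /szero big1 // => i _; rewrite mul0r.
Qed.

Lemma smulDr a b c : smul c (sadd a b) = sadd (smul c a) (smul c b).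
Proof. by rewrite smulC smulDl !(smulC c). Qed.
Lemma smulZr k a c : smul c (sscale k a) = sscale k (smul c a).
Proof. by rewrite smulC smulZl smulC. Qed.
Lemma smulXr a c : smul c (sX a) = sX (smul c a).
Proof. by rewrite smulC smulXl smulC. Qed.
Lemma smul1r c : smul c (sone S) = c.
Proof. by rewrite smulC smul1l. Qed.
Lemma smul0r c : smul c (szero S) = szero S.
Proof. by rewrite smulC smul0l. Qed.

Lemma sXD a b : sX (sadd a b) = sadd (sX a) (sX b).
Proof. by apply: functional_extensionality => -[|n]; rewrite /sX /sadd ?addr0. Qed.
Lemma sXZ k a : sX (sscale k a) = sscale k (sX a).
Proof. by apply: functional_extensionality => -[|n]; rewrite /sX /sscale ?mulr0. Qed.
Lemma sZD k a b : sscale k (sadd a b) = sadd (sscale k a) (sscale k b).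
Proof. by apply: functional_extensionality => n; rewrite /sscale /sadd mulrDr. Qed.
Lemma sXz : sX (szero S) = szero S.
Proof. by apply: functional_extensionality => -[|n]. Qed.
Lemma sZz k : sscale k (szero S) = szero S.
Proof. by apply: functional_extensionality => n; rewrite /sscale /szero mulr0. Qed.
Lemma saddz a : sadd a (szero S) = a.
Proof. by apply: functional_extensionality => n; rewrite /sadd /szero addr0. Qed.
Lemma saddA a b c : sadd a (sadd b c) = sadd (sadd a b) c.
Proof. by apply: functional_extensionality => n; rewrite /sadd addrA. Qed.

Lemma sinv_upto_size a n : size (sinv_upto a n) = n.+1.
Proof. by elim: n => //= n IH; rewrite size_rcons IH. Qed.

Lemma sinv_upto_nth a n i : (i <= n)%N -> nth 0 (sinv_upto a n) i = sinv a i.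
Proof.
elim: n => [|n IH]; first by rewrite leqn0 => /eqP ->.
rewrite leq_eqVlt => /orP[/eqP -> //|]; rewrite ltnS => lin.
by rewrite /= nth_rcons sinv_upto_size ltnS lin IH.
Qed.

Lemma sinv0 a : sinv a 0 = 1.
Proof. by []. Qed.

Lemma sinvS a n : sinv a n.+1 = - \sum_(i < n.+1) a i.+1 * sinv a (n - i)%N.
Proof.
rewrite {1}/sinv /= nth_rcons sinv_upto_size ltnn eqxx; congr (- _).
by apply: eq_bigr => i _; rewrite sinv_upto_nth // leq_subr.
Qed.

Lemma smul_sinv a : a 0%N = 1 -> smul a (sinv a) = sone S.
Proof.
move=> a0; apply: functional_extensionality => -[|n]; rewrite /smul /sone.
  by rewrite big_ord_recl big_ord0 addr0 a0 mul1r.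
rewrite big_ord_recl a0 mul1r subn0 sinvS.
under [X in _ + X]eq_bigr do rewrite /= subSS.
by rewrite addNr.
Qed.
End Ser.


Section JF.
Variable S : comRingType.
Variables (al be : nat -> S) (T : nat -> nat -> S).
Hypothesis T0 : forall k, T 0 k = (k == 0)%:R.
Hypothesis TS : forall n k, T n.+1 k =
  (if k is k'.+1 then T n k' else 0) + al k.+1 * T n k + be k.+1 * T n k.+1.

Section Fixm.
Variable m : nat.
Definition G j := jfrac_tail al be (m - j) j.+1.

Lemma GS j : (j < m)%N -> G j = sinv (sadd (sone S) (sopp (sadd (sX (sscale (al j.+1) (sone S)))
    (sX (sX (sscale (be j.+1) (G j.+1))))))).
Proof. by move=> jm; rewrite /G -(subnSK jm). Qed.

Lemma Geq j : (j < m)%N -> G j = sadd (sone S) (sadd (sX (sscale (al j.+1) (G j)))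
   (sX (sX (sscale (be j.+1) (smul (G j.+1) (G j)))))).
Proof.
move=> jm.
pose D := sadd (sone S) (sopp (sadd (sX (sscale (al j.+1) (sone S))) (sX (sX (sscale (be j.+1) (G j.+1)))))).
have D0 : D 0%N = 1.
  by rewrite /D /sadd /sopp /sone /sX /= addr0 subr0.
have H := @smul_sinv S D D0; rewrite -GS // in H.
rewrite /D smulDl smul1l smulNl smulDl !smulXl !smulZl smul1l in H.
apply: functional_extensionality => n.
move: (congr1 (fun f => f n) H); rewrite /sadd /sopp => <-; by rewrite subrK.
Qed.

Fixpoint C j := if j is j'.+1 then sX (smul (C j') (G j)) else G 0.

Lemma CE j : (j < m)%N -> C j = sadd (if j is j'.+1 then sX (C j') else sone S)
   (sadd (sX (sscale (al j.+1) (C j))) (sX (sscale (be j.+1) (C j.+1)))).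
Proof.
case: j => [|j] jm /=.
  rewrite {1}(Geq 0 jm) (smulC _ (G 1)) !sXZ; done.
rewrite {1}(Geq j.+1 jm) !(smulDr, smul1r, smulXr, smulZr, smulXl, smulZl, sXD, sXZ, smulA).
by rewrite (smulC _ (G j.+2)).
Qed.

Lemma C0 j : (0 < m)%N -> C j 0%N = (j == 0)%:R.
Proof. by case: j => [|j] m0 //=; rewrite GS. Qed.

Lemma CT n j : (n + j < m)%N -> C j n = T n j.
Proof.
elim: n j => [|n IH] j nm; first by rewrite C0 ?T0 //; lia.
have jm : (j < m)%N by lia.
move: (congr1 (fun f => f n.+1) (CE j jm)); rewrite /sadd /sX /sscale /sone => ->.
rewrite TS addrA; congr (_ + _ * _ + _ * _); rewrite ?IH //; try lia.
by case: j nm {jm} => [|j] nm //=; rewrite IH //; lia.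
Qed.
End Fixm.

Lemma jfrac_T m n : (n < m)%N -> jfrac_conv al be m n = T n 0.
Proof.
move=> nm; have := @CT m n 0; rewrite addn0 => <- //=.
by rewrite /G subn0.
Qed.
End JF.


Section Herm.
Variable R : fieldType.
Hypothesis hR : [pchar R] =i pred0.
Variable r : R.

Lemma natnz n : (n%:R : R) != 0 = (n != 0%N).
Proof. by rewrite ((pcharf0P R).1 hR). Qed.
Lemma factnz n : (n`!%:R : R) != 0.
Proof. by rewrite natnz -lt0n fact_gt0. Qed.
Lemma Snz n : (n.+1%:R : R) != 0.
Proof. by rewrite natnz. Qed.

Definition c : R := r / 2%:R.
Definition aa : {poly R} := 2%:R *: 'X + 1.
Definition PP : {poly R} := 'X * ('X + 1).
Definition wc (m i : nat) : R := (m`!)%:R / ((i`!)%:R * ((m - 2 * i)`!)%:R) * c ^+ i.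
Definition fH (m i : nat) : {poly R} :=
  if (2 * i <= m)%N then wc m i *: (PP ^+ i * aa ^+ (m - 2 * i)) else 0.
Definition H (m : nat) : {poly R} := \sum_(i < m.+1) fH m i.

Lemma wc0 m : wc m 0 = 1.
Proof. by rewrite /wc muln0 subn0 fact0 mul1r expr0 mulr1 divff // factnz. Qed.

Lemma H0 : H 0 = 1.
Proof. by rewrite /H big_ord_recl big_ord0 addr0 /fH /= wc0 scale1r mul1r. Qed.

Lemma wcA i q : wc (2 * i + 1 + q).+2 i.+1 =
  wc (2 * i + 1 + q).+1 i.+1 + ((2 * i + 1 + q).+1%:R * r) * wc (2 * i + 1 + q) i.
Proof.
rewrite /wc.
have -> : ((2 * i + 1 + q).+2 - 2 * i.+1 = q.+1)%N by lia.
have -> : ((2 * i + 1 + q).+1 - 2 * i.+1 = q)%N by lia.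
have -> : ((2 * i + 1 + q) - 2 * i = q.+1)%N by lia.
rewrite !factS !natrM exprS /c.
have h2 : (2%:R : R) != 0 by rewrite natnz.
have := factnz i; have := factnz q; have := Snz i; have := Snz q.
have := Snz (2 * i + 1 + q).
move=> *; field.
by rewrite ![1 + _]addrC !natr1 !factnz !Snz.
Qed.


Lemma wcB i : wc (2 * i).+2 i.+1 = ((2 * i).+1%:R * r) * wc (2 * i) i.
Proof.
rewrite /wc.
have -> : ((2 * i).+2 - 2 * i.+1 = 0)%N by lia.
have -> : ((2 * i) - 2 * i = 0)%N by lia.
rewrite !factS !natrM exprS /c fact0 mulr1.
have := factnz i; have := Snz i; have := Snz (2 * i).
move=> *; field.
by rewrite ![1 + _]addrC !natr1 !factnz !Snz.
Qed.

Lemma fHrec m i : fH m.+2 i.+1 = aa * fH m.+1 i.+1 + ((m.+1)%:R * r) *: (PP * fH m i).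
Proof.
rewrite /fH.
have [lt|le] := ltnP (2 * i) m.
  have [q ->] : exists q, m = (2 * i + 1 + q)%N by exists (m - (2 * i + 1))%N; lia.
  have c1 : (2 * i.+1 <= (2 * i + 1 + q).+2)%N by lia.
  have c2 : (2 * i.+1 <= (2 * i + 1 + q).+1)%N by lia.
  have c3 : (2 * i <= (2 * i + 1 + q))%N by lia.
  rewrite c1 c2 c3 wcA.
  have -> : ((2 * i + 1 + q).+2 - 2 * i.+1 = q.+1)%N by lia.
  have -> : ((2 * i + 1 + q).+1 - 2 * i.+1 = q)%N by lia.
  have -> : ((2 * i + 1 + q) - 2 * i = q.+1)%N by lia.
  rewrite -!mul_polyC !polyCD !polyCM !exprS; ring.
have [eq|gt] := eqVneq m (2 * i).
  subst m.
  have c1 : (2 * i.+1 <= (2 * i).+2)%N by lia.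
  have c2 : (2 * i.+1 <= (2 * i).+1)%N = false by lia.
  have c3 : (2 * i <= (2 * i))%N by lia.
  rewrite c1 c2 c3 wcB.
  have -> : ((2 * i).+2 - 2 * i.+1 = 0)%N by lia.
  have -> : ((2 * i) - 2 * i = 0)%N by lia.
  rewrite -!mul_polyC !polyCM !exprS; ring.
have c1 : (2 * i.+1 <= m.+2)%N = false by lia.
have c2 : (2 * i.+1 <= m.+1)%N = false by lia.
have c3 : (2 * i <= m)%N = false by lia.
by rewrite c1 c2 c3 !mulr0 scaler0 addr0.
Qed.

Lemma fH_big m i : (m < 2 * i)%N -> fH m i = 0.
Proof. by move=> mi; rewrite /fH ifF //; lia. Qed.

Lemma H1 : H 1 = aa.
Proof.
by rewrite /H !big_ord_recl big_ord0 /fH /= wc0 scale1r mul1r expr1 !addr0.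
Qed.

Lemma Hrec m : H m.+2 = aa * H m.+1 + ((m.+1)%:R * r) *: (PP * H m).
Proof.
rewrite /H big_ord_recl [X in aa * X]big_ord_recl mulrDr -addrA; congr (_ + _).
  by rewrite /fH !leq0n !muln0 !subn0 !wc0 !scale1r !mul1r exprS.
rewrite big_ord_recr /= (_ : fH m.+2 (bump 0 m.+1) = 0) ?addr0; last by apply: fH_big; rewrite /bump; lia.
rewrite !mulr_sumr scaler_sumr -big_split /=.
by apply: eq_bigr => i _; rewrite /bump leq0n add1n fHrec.
Qed.


Lemma Hrec' s : H s.+1 = aa * H s + (s%:R * r) *: (PP * H s.-1).
Proof.
case: s => [|s]; first by rewrite H1 H0 mulr1 mul0r scale0r addr0.
exact: Hrec.
Qed.

Definition T (n k : nat) : {poly R} := 'C(n, k)%:R * H (n - k).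

Lemma T0 k : T 0 k = (k == 0)%:R.
Proof. by rewrite /T bin0n sub0n H0 mulr1. Qed.

Lemma TS n k : T n.+1 k =
  (if k is k'.+1 then T n k' else 0) + aa * T n k + ((k.+1)%:R * r) *: PP * T n k.+1.
Proof.
rewrite /T; case: k => [|k].
  rewrite !subn0 !bin0 bin1 subn1 add0r mul1r mul1r Hrec'.
  rewrite -!mul_polyC !polyCM !polyC_natr; ring.
have [kn|nk] := leqP k.+1 n.
  have [s es] : exists s, n = (k.+1 + s)%N by exists (n - k.+1)%N; lia.
  have -> : (n.+1 - k.+1 = s.+1)%N by lia.
  have -> : (n - k = s.+1)%N by lia.
  have -> : (n - k.+1 = s)%N by lia.
  have -> : (n - k.+2 = s.-1)%N by lia.
  have e : ((k.+2)%:R * 'C(n, k.+2)%:R : {poly R}) = s%:R * 'C(n, k.+1)%:R.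
    by rewrite -!natrM mul_bin_left; congr (_ * _)%:R; lia.
  rewrite binS natrD Hrec'.
  rewrite -!mul_polyC !polyCM !polyC_natr.
  apply/eqP; rewrite -subr_eq0; apply/eqP.
  transitivity ((r%:P * PP * H s.-1) * (s%:R * 'C(n, k.+1)%:R - (k.+2)%:R * 'C(n, k.+2)%:R)).
    ring.
  by rewrite e subrr mulr0.
have [ekn|] := eqVneq k n.
  subst k; rewrite !binn !bin_small // !mul0r !mulr0 !addr0 mul1r subnn.
  by [].
move=> kn; have nk' : (n < k)%N by lia.
by rewrite !bin_small // ?mul0r ?mulr0 ?addr0 //; lia.
Qed.

End Herm.


Section D.
Variable R : fieldType.
Hypothesis hR : [pchar R] =i pred0.
Variable r : R.
Local Notation cc := (@c R r).
Local Notation fnz := (@factnz R hR).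

Lemma binR m n : (m <= n)%N -> ('C(n, m)%:R : R) = n`!%:R / (m`!%:R * (n - m)`!%:R).
Proof.
move=> mn; rewrite -(bin_fact mn) !natrM.
have := fnz m; have := fnz (n - m); move=> *; field.
by rewrite !fnz.
Qed.

Lemma sx_eq : sx R = sX (sone R).
Proof. by apply: functional_extensionality => -[|[|i]]. Qed.

Lemma iterX k (s : nat -> R) j : iter k (@sX R) s j = if (k <= j)%N then s (j - k)%N else 0.
Proof.
elim: k j => [|k IH] j; first by rewrite subn0.
by case: j => [|j] //=; rewrite IH.
Qed.

Lemma spow_sx k : spow (sx R) k = iter k (@sX R) (sone R).
Proof. by elim: k => //= k IH; rewrite -IH sx_eq smulXl smul1l. Qed.

Lemma smul_iterX k (a b : nat -> R) : smul a (iter k (@sX R) b) = iter k (@sX R) (smul a b).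
Proof. by elim: k => //= k IH; rewrite smulXr IH. Qed.

Lemma Eval j k : eriordan (sexp R) (sx R) j k = 'C(j, k)%:R.
Proof.
rewrite /eriordan spow_sx smul_iterX smul1r iterX /sexp.
case: leqP => kj; last by rewrite bin_small // mulr0.
rewrite binR //; field.
by rewrite !fnz.
Qed.

Lemma sxr_eq : sxr r = sadd (sX (sone R)) (sX (sX (sscale cc (sone R)))).
Proof.
apply: functional_extensionality => -[|[|[|i]]]; rewrite /sxr /sadd /sX /sscale /sone /c /=; ring.
Qed.

Lemma spow_sxr j i : spow (sxr r) j i =
  if (j <= i)%N then 'C(j, i - j)%:R * cc ^+ (i - j) else 0.
Proof.
elim: j i => [|j IH] i.
  by rewrite /spow /= /sone subn0 bin0n; case: i => [|i] //=; rewrite ?mul0r ?mul1r.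
have -> : spow (sxr r) j.+1 = smul (sadd (sX (sone R)) (sX (sX (sscale cc (sone R))))) (spow (sxr r) j).
  by rewrite -sxr_eq.
rewrite smulDl smulXl smul1l smulXl smulXl smulZl smul1l.
case: i => [|[|i]]; rewrite /sadd /sX /sscale /=.
- by rewrite addr0.
- by rewrite addr0 IH; case: j {IH} => [|j] //=; rewrite bin0 expr0.
rewrite !IH.
have [ji|] := leqP j i.
  have [t ->] : exists t, i = (j + t)%N by exists (i - j)%N; lia.
  have -> : (j <= (j + t).+1)%N by lia.
  have -> : ((j + t).+1 - j = t.+1)%N by lia.
  have -> : ((j + t).+2 - j.+1 = t.+1)%N by lia.
  have -> : (j + t - j = t)%N by lia.
  have -> : (j < (j + t).+2)%N by lia.
  rewrite binS natrD exprS; ring.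
move=> ij; have [->|ne] := eqVneq j i.+1.
  by rewrite ltnSn ltnSn !subnn !bin0 !expr0 mulr0 addr0.
have c1 : (j <= i.+1)%N = false by lia.
have c2 : (j < i.+2)%N = false by lia.
by rewrite c1 c2 mulr0 addr0.
Qed.


Lemma Aval n j : (j <= n)%N -> eriordan (sexp R) (sxr r) n j =
  n`!%:R / j`!%:R * \sum_(i < n.+1 - j) ('C(j, i)%:R * cc ^+ i / (n - (j + i))`!%:R).
Proof.
move=> jn; rewrite /eriordan smulC /smul; congr (_ * _).
rewrite (eq_bigr (fun l : 'I_n.+1 => if (j <= l)%N then
     'C(j, l - j)%:R * cc ^+ (l - j) / (n - l)`!%:R else 0)); last first.
  by move=> l _; rewrite spow_sxr /sexp; case: ifP => _ //; rewrite mul0r.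
rewrite (@sum_shift R (fun l => 'C(j, l - j)%:R * cc ^+ (l - j) / (n - l)`!%:R)); last by lia.
by apply: eq_bigr => i _; rewrite addKn.
Qed.

Lemma L3 j n : (j <= n)%N ->
  \sum_(k < n.+1) ('C(j, n - k)%:R : {poly R}) * 'X ^+ k = ('X + 1) ^+ j * 'X ^+ (n - j).
Proof.
move=> jn; rewrite (reindex_inj rev_ord_inj) /=.
rewrite exprDn mulr_suml (big_ord_widen _ (fun i => 'X ^+ (j - i) * 1 ^+ i *+ 'C(j, i) * 'X ^+ (n - j)) (_ : j.+1 <= n.+1)%N) ?ltnS //.
rewrite [RHS]big_mkcond /=; apply: eq_bigr => k _.
rewrite subSS subKn; last by rewrite -ltnS.
case: ltnP => kj.
  rewrite expr1n mulr1 [RHS]mulrnAl -exprD -[RHS]mulr_natl; congr (_ * 'X ^+ _); lia.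
by rewrite bin_small // mul0r.
Qed.

Lemma Qform n : rev_eF_gf r n =
  \sum_(j < n.+1) (eriordan (sexp R) (sxr r) n j)%:P * (('X + 1) ^+ j * 'X ^+ (n - j)).
Proof.
rewrite /rev_eF_gf /eF.
under eq_bigr do rewrite rmorph_sum mulr_suml.
rewrite exchange_big /=; apply: eq_bigr => j _.
under eq_bigr do rewrite Eval polyCM polyC_natr -mulrA.
by rewrite -mulr_sumr L3 // -ltnS.
Qed.


Lemma aa_eq : @aa R = 'X + ('X + 1).
Proof. by rewrite /aa scaler_nat mulr2n addrA. Qed.

Definition Fj n j i : {poly R} :=
  (n`!%:R / j`!%:R * ('C(j, i)%:R * cc ^+ i / (n - (j + i))`!%:R))%:P *
  (('X + 1) ^+ j * 'X ^+ (n - j)).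

Lemma Fterm n i p : (2 * i + p <= n)%N ->
  Fj n (i + p) i = @wc R r n i *: (@PP R ^+ i * ('X ^+ (n - 2 * i - p) * ('X + 1) ^+ p *+ 'C(n - 2 * i, p))).
Proof.
move=> h; have [q ->] : exists q, n = (2 * i + p + q)%N by exists (n - (2 * i + p))%N; lia.
rewrite /Fj /wc.
have -> : (2 * i + p + q - (i + p + i) = q)%N by lia.
have -> : (2 * i + p + q - (i + p) = i + q)%N by lia.
have -> : (2 * i + p + q - 2 * i = p + q)%N by lia.
have -> : (p + q - p = q)%N by lia.
have es : (2 * i + p + q)`!%:R / (i + p)`!%:R * ('C(i + p, i)%:R * cc ^+ i / q`!%:R) =
   (2 * i + p + q)`!%:R / (i`!%:R * (p + q)`!%:R) * cc ^+ i * 'C(p + q, p)%:R.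
  rewrite binR ?leq_addr // binR ?leq_addr //.
  have -> : (i + p - i = p)%N by lia.
  have -> : (p + q - p = q)%N by lia.
  field.
  by rewrite !fnz.
rewrite es -mul_polyC -[X in _ = _ * (_ * X)]mulr_natl !polyCM !polyC_natr /PP.
rewrite !exprD exprMn.
rewrite exprMn; move: (('X + 1 : {poly R}) ^+ i) (('X + 1 : {poly R}) ^+ p) (('X : {poly R}) ^+ i) (('X : {poly R}) ^+ q) => Z1 Z2 Y1 Y2.
set A := ((_)^-1)%:P; set B := (r ^+ i * _)%:P; move: A B => A B.
move: ((2 * i + p + q)`!%:R : {poly R}) => F; move: ('C(p + q, p)%:R : {poly R}) => Cc; ring.
Qed.

Lemma Fj0 n j i : (j < i)%N -> Fj n j i = 0.
Proof.
move=> ji; rewrite /Fj bin_small //.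
rewrite mul0r mul0r mulr0 rmorph0 mul0r //.
Qed.

Lemma Qfinal n : rev_eF_gf r n = @H R r n.
Proof.
rewrite Qform.
rewrite (eq_bigr (fun j : 'I_n.+1 => \sum_(i < n.+1) (if (i < n.+1 - j)%N then Fj n j i else 0))); last first.
  move=> j _. rewrite Aval; last by rewrite -ltnS.
  rewrite mulr_sumr rmorph_sum mulr_suml.
  by rewrite (big_ord_widen _ (fun i => Fj n j i) (leq_subr j n.+1)) big_mkcond /=.
rewrite exchange_big /H; apply: eq_bigr => i _.
have -> : \sum_(j < n.+1) (if (i < n.+1 - j)%N then Fj n j i else 0) =
    \sum_(j < n.+1) (if (i <= j)%N then (if (i < n.+1 - j)%N then Fj n j i else 0) else 0).
  apply: eq_bigr => j _; case: (leqP i j) => // ji; case: ifP => // _.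
  by rewrite Fj0.
rewrite (@sum_shift _ (fun j : nat => if (i < n.+1 - j)%N then Fj n j i else 0) i n.+1); last by apply: ltnW.
rewrite /fH; case: leqP => hi; last first.
  by rewrite big1 // => p _; rewrite ifF //; lia.
rewrite aa_eq exprDn mulr_sumr scaler_sumr.
have hw : ((n - 2 * i).+1 <= n.+1 - i)%N by lia.
rewrite [RHS](big_ord_widen _ (fun p => @wc R r n i *: (@PP R ^+ i * ('X ^+ (n - 2 * i - p) * ('X + 1) ^+ p *+ 'C(n - 2 * i, p)))) hw).
rewrite [RHS]big_mkcond /=; apply: eq_bigr => p _.
have -> : (i < n.+1 - (i + p))%N = (p < (n - 2 * i).+1)%N by apply/idP/idP => ?; lia.
case: ifP => // hp; rewrite Fterm //; lia.
Qed.
End D.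


Theorem proposition3 (R : fieldType) (hR : [pchar R] =i pred0) (r : R) :
  is_Jfrac (fun _ => 2%:R *: 'X + 1 : {poly R})
           (fun n => (n%:R * r) *: ('X * ('X + 1)) : {poly R})
           (rev_eF_gf r).
Proof.
move=> n; exists n.+1 => m nm.
transitivity (@T R r n 0).
  apply: jfrac_T => //.
    by move=> k; apply: T0.
  by move=> n' k; apply: TS.
by rewrite (@Qfinal R hR r) /T bin0 subn0 mul1r.
Qed.
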